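(* Let $\phi:\mathbb{M}_n\to\mathbb{M}_m$ be a positive linear map with Hilbert–Schmidt adjoint $\phi^*$, and let $X\in\mathbb{M}_m^+$. Then: (1) $\ker(R_X)\subseteq\ker(\phi^* )$ if and only if $\ker(X)\subseteq\ker(\phi(\mathbf{1}_n))$; (2) if $\ker(R_X)\subseteq\ker(\phi^* )$, then $\ker(R_{\phi^*(X)})\subseteq\ker(\phi)$. The same two statements hold with $L_X$ and $L_{\phi^*(X)}$ in place of $R_X$ and $R_{\phi^*(X)}$.
   Context: $\mathbb{M}_k$ denotes the complex $k\times k$ matrices, $\mathbb{M}_k^+$ the positive semidefinite ones, $\mathbf{1}_n$ the identity. The adjoint $\phi^*:\mathbb{M}_m\to\mathbb{M}_n$ is with respect to $\langle A,B\rangle=\mathrm{Tr}[A^*B]$. For $X\in\mathbb{M}_k$, $R_X$ and $L_X$ are the linear operators on $\mathbb{M}_k$ given by $R_X(A)=AX$ and $L_X(A)=XA$; kernels of $R_X$, $\phi^*$, $\phi$ are kernels as linear maps on matrix spaces. A positive map sends positive semidefinite matrices to positive semidefinite matrices. *)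

(* Defs.v *)
(* Complex numbers are modelled as R[i] = complex R for a
   real closed field R (taking R to be the reals gives the complex numbers). *)
From HB Require Import structures.
From mathcomp Require Import all_boot all_order all_algebra.
From mathcomp Require Export complex.
Set Implicit Arguments. Unset Strict Implicit. Unset Printing Implicit Defensive.
Import Order.TTheory GRing.Theory Num.Theory.
Local Open Scope ring_scope.

Section Defs.
Variable C : numClosedFieldType.

Definition mxadj (p q : nat) (A : 'M[C]_(p, q)) : 'M[C]_(q, p) :=
  (map_mx Num.conj_op A)^T.

Definition hs_inner (k : nat) (A B : 'M[C]_k) : C := \tr (mxadj A *m B).

Definition psd (k : nat) (A : 'M[C]_k) : Prop :=
  mxadj A = A /\ forall v : 'cV[C]_k, 0 <= (mxadj v *m A *m v) 0 0.

Definition positive_map (n m : nat) (phi : 'M[C]_n -> 'M[C]_m) : Prop :=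
  forall A, psd A -> psd (phi A).

Definition is_hs_adjoint (n m : nat) (phi : 'M[C]_n -> 'M[C]_m)
  (phis : 'M[C]_m -> 'M[C]_n) : Prop :=
  forall (A : 'M[C]_n) (B : 'M[C]_m), hs_inner (phi A) B = hs_inner A (phis B).

Definition R_op (k : nat) (X : 'M[C]_k) : 'M[C]_k -> 'M[C]_k := fun A => A *m X.
Definition L_op (k : nat) (X : 'M[C]_k) : 'M[C]_k -> 'M[C]_k := fun A => X *m A.

Definition ker_sub (p q r : nat) (f : 'M[C]_p -> 'M[C]_q) (g : 'M[C]_p -> 'M[C]_r)
  : Prop := forall A, f A = 0 -> g A = 0.

Definition mxker_sub (k : nat) (X Y : 'M[C]_k) : Prop :=
  forall v : 'cV[C]_k, X *m v = 0 -> Y *m v = 0.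
End Defs.

(* Main.v *)
Require Import Defs.
From HB Require Import structures.
From mathcomp Require Import all_boot all_order all_algebra complex.
From mathcomp Require Import sesquilinear spectral.
From mathcomp Require Import ring lra.
Import Order.TTheory GRing.Theory Num.Theory.
Local Open Scope ring_scope.

Set Implicit Arguments. Unset Strict Implicit. Unset Printing Implicit Defensive.

Section Gen.
Variable C : numClosedFieldType.

Lemma hadjE p q (A : 'M[C]_(p,q)) i j : mxadj A i j = (A j i)^*.
Proof. by rewrite !mxE. Qed.

Lemma hadjK p q (A : 'M[C]_(p,q)) : mxadj (mxadj A) = A.
Proof. by apply/matrixP=> i j; rewrite !hadjE conjCK. Qed.

Lemma hadjM p q r (A : 'M[C]_(p,q)) (B : 'M[C]_(q,r)) :
  mxadj (A *m B) = mxadj B *m mxadj A.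
Proof. by rewrite /mxadj map_mxM trmx_mul. Qed.

Lemma hadjD p q (A B : 'M[C]_(p,q)) : mxadj (A + B) = mxadj A + mxadj B.
Proof. by apply/matrixP=> i j; rewrite !mxE rmorphD. Qed.

Lemma hadjN p q (A : 'M[C]_(p,q)) : mxadj (- A) = - mxadj A.
Proof. by apply/matrixP=> i j; rewrite !mxE rmorphN. Qed.

Lemma hadjZ p q a (A : 'M[C]_(p,q)) : mxadj (a *: A) = a^* *: mxadj A.
Proof. by apply/matrixP=> i j; rewrite !mxE rmorphM. Qed.

Lemma hadj0 p q : mxadj (0 : 'M[C]_(p,q)) = 0.
Proof. by apply/matrixP=> i j; rewrite !mxE rmorph0. Qed.

Lemma hadj1 p : mxadj (1%:M : 'M[C]_p) = 1%:M.
Proof. by apply/matrixP=> i j; rewrite !mxE eq_sym rmorph_nat. Qed.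

Lemma hadj_sum p q I (r : seq I) (F : I -> 'M[C]_(p,q)) :
  mxadj (\sum_(i <- r) F i) = \sum_(i <- r) mxadj (F i).
Proof.
apply/matrixP=> i j; rewrite hadjE !summxE rmorph_sum.
by apply: eq_bigr => k _; rewrite hadjE.
Qed.

Lemma hadj_delta p q (i : 'I_p) (j : 'I_q) : mxadj (delta_mx i j : 'M[C]__) = delta_mx j i.
Proof. by apply/matrixP=> a b; rewrite !mxE rmorph_nat andbC. Qed.

Lemma htr_adj p (A : 'M[C]_p) : \tr (mxadj A) = (\tr A)^*.
Proof. by rewrite /mxtrace rmorph_sum; apply: eq_bigr => i _; rewrite hadjE. Qed.

Lemma hadjA0 p q (A : 'M[C]_(p,q)) : \tr (mxadj A *m A) = 0 -> A = 0.
Proof.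
have E : \tr (mxadj A *m A) = \sum_i \sum_j A j i * (A j i)^*.
  by apply: eq_bigr => i _; rewrite mxE; apply: eq_bigr => j _; rewrite hadjE mulrC.
rewrite E => h; apply/matrixP => j i; rewrite mxE.
have h1 := @psumr_eq0P _ _ xpredT _ (fun i0 _ => sumr_ge0 _ (fun k _ => mul_conjC_ge0 (A k i0))) h i isT.
have := @psumr_eq0P _ _ xpredT _ (fun k _ => mul_conjC_ge0 (A k i)) h1 j isT.
by move/eqP; rewrite mul_conjC_eq0 => /eqP.
Qed.
End Gen.


Section Gen2.
Variable C : numClosedFieldType.

Definition bf k (x : 'cV[C]_k) (M : 'M[C]_k) (y : 'cV[C]_k) := (mxadj x *m M *m y) 0 0.

Lemma bf_delta k (M : 'M[C]_k) i j : bf (delta_mx i 0) M (delta_mx j 0) = M i j.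
Proof. by rewrite /bf hadj_delta -rowE -colE !mxE. Qed.

Lemma adj_spec k (M : 'M[C]_k) : mxadj M = map_mx Num.conj (M ^T).
Proof. by rewrite /mxadj map_trmx. Qed.

Lemma herm_decomp k (M : 'M[C]_k) : mxadj M = M ->
  exists P : 'M[C]_k, exists d : 'rV[C]_k,
   [/\ mxadj P *m P = 1%:M, P *m mxadj P = 1%:M, (forall i, (d 0 i)^* = d 0 i)
     & M = mxadj P *m diag_mx d *m P].
Proof.
move=> hM.
have Mh : M \is hermsymmx.
  by rewrite is_hermitianmxE expr0 scale1r -adj_spec hM.
have /orthomx_spectralP E := hermitian_normalmx Mh.
have U := spectral_unitarymx M.
have PP : spectralmx M *m mxadj (spectralmx M) = 1%:M.
  by rewrite adj_spec; apply/eqP; exact: U.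
exists (spectralmx M), (spectral_diag M); split => //.
- exact: mulmx1C.
- move=> i; apply: conj_Creal.
  by have /mxOverP := hermitian_spectral_diag_real Mh; apply.
- by rewrite {1}E invmx_unitary // adj_spec.
Qed.


Lemma psd_decomp k (M : 'M[C]_k) : psd M ->
  exists P : 'M[C]_k, exists d : 'rV[C]_k,
   [/\ mxadj P *m P = 1%:M, P *m mxadj P = 1%:M, (forall i, 0 <= d 0 i)
     & M = mxadj P *m diag_mx d *m P].
Proof.
move=> [hM hq]; have [P [d [PP1 PP2 _ E]]] := herm_decomp hM.
exists P, d; split => // i.
have := hq (mxadj P *m (delta_mx i 0 : 'cV_k)).
have -> : mxadj (mxadj P *m (delta_mx i 0 : 'cV_k)) *m M *m (mxadj P *m (delta_mx i 0 : 'cV_k))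
   = (delta_mx 0 i : 'rV_k) *m diag_mx d *m (delta_mx i 0 : 'cV_k).
  rewrite E hadjM hadjK hadj_delta !mulmxA -[delta_mx 0 i *m P *m _]mulmxA PP2 mulmx1.
  by rewrite -[_ *m P *m mxadj P]mulmxA PP2 mulmx1.
by rewrite -rowE -colE !mxE eqxx mulr1n.
Qed.

Lemma psd_rank1 k (w : 'cV[C]_k) : psd (w *m mxadj w).
Proof.
split; first by rewrite hadjM hadjK.
move=> x; have -> : mxadj x *m (w *m mxadj w) *m x
   = (mxadj x *m w) *m mxadj (mxadj x *m w) by rewrite hadjM hadjK !mulmxA.
by rewrite mxE; apply: sumr_ge0 => j _; rewrite hadjE; apply: mul_conjC_ge0.
Qed.

Lemma psd_quad0 k (M : 'M[C]_k) v : psd M -> bf v M v = 0 -> M *m v = 0.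
Proof.
move=> hM; have [P [d [PP1 PP2 dge E]]] := psd_decomp hM.
set y := P *m v.
have Ey : y = P *m v by [].
clearbody y.
have -> : bf v M v = (mxadj y *m diag_mx d *m y) 0 0 by rewrite /bf E Ey hadjM !mulmxA.
rewrite mul_mx_diag mxE => h.
have hn : forall i : 'I_k, xpredT i -> 0 <= (\matrix_(i, j) (mxadj y i j * d 0 j)) 0 i * y i 0.
  move=> i _; rewrite mxE hadjE mulrAC mulrC; apply: mulr_ge0 => //.
  by rewrite mulrC; apply: mul_conjC_ge0.
have h2 : forall j, (mxadj y) 0 j * d 0 j * y j 0 = 0.
  by move=> j; have := @psumr_eq0P _ _ _ _ hn h j isT; rewrite mxE.
have Dy : diag_mx d *m y = 0.
  apply/matrixP => i j; rewrite mul_diag_mx !mxE (ord1 j).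
  have := h2 i; rewrite hadjE mulrAC => /eqP; rewrite mulf_eq0 => /orP [|/eqP ->]; last by rewrite mul0r.
  by rewrite mulrC mul_conjC_eq0 => /eqP ->; rewrite mulr0.
by rewrite E -!mulmxA -Ey Dy !mulmx0.
Qed.

End Gen2.


Section Gen3.
Variable C : numClosedFieldType.

Lemma bf_sum k (x y : 'cV[C]_k) I (r : seq I) (F : I -> 'M[C]_k) :
  bf x (\sum_(i <- r) F i) y = \sum_(i <- r) bf x (F i) y.
Proof. by rewrite /bf mulmx_sumr mulmx_suml summxE. Qed.

Lemma bf0 k (x : 'cV[C]_k) (M : 'M[C]_k) : M *m x = 0 -> bf x M x = 0.
Proof. by move=> h; rewrite /bf -mulmxA h mulmx0 mxE. Qed.

Lemma herm_split k (A : 'M[C]_k) :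
  [/\ mxadj (A + mxadj A) = A + mxadj A,
      mxadj ('i *: (mxadj A - A)) = 'i *: (mxadj A - A),
      (2:C) *: A = (A + mxadj A) + 'i *: ('i *: (mxadj A - A))
    & (2:C) *: mxadj A = (A + mxadj A) - 'i *: ('i *: (mxadj A - A))].
Proof.
split; apply/matrixP => i j; rewrite !mxE.
- by rewrite rmorphD /= conjCK addrC.
- by rewrite rmorphM rmorphB /= conjCK conjCi; ring.
- by rewrite mulrA mulCii; ring.
- by rewrite mulrA mulCii; ring.
Qed.

Variables (n m : nat) (phi : {linear 'M[C]_n -> 'M[C]_m}).
Hypothesis hpos : positive_map phi.

Lemma kerK_herm (v : 'cV[C]_m) H : phi 1%:M *m v = 0 -> mxadj H = H ->
  phi H *m v = 0 /\ mxadj (phi H) = phi H.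
Proof.
move=> hv hH; have [P [d [PP1 PP2 dr E]]] := herm_decomp hH.
pose w := fun k : 'I_n => mxadj P *m (delta_mx k 0 : 'cV[C]_n).
have Ew : forall k, mxadj P *m (delta_mx k k *m P) = w k *m mxadj (w k).
  move=> k; rewrite /w hadjM hadjK hadj_delta !mulmxA -[mxadj P *m _ *m _]mulmxA.
  by rewrite -!mulmxA; congr (_ *m _); rewrite mulmxA mul_delta_mx.
have E1 : 1%:M = \sum_k w k *m mxadj (w k).
  rewrite -{1}PP1 -[P in _ *m P]mul1mx mx1_sum_delta mulmx_suml mulmx_sumr.
  by apply: eq_bigr => k _; rewrite Ew.
have EH : H = \sum_k d 0 k *: (w k *m mxadj (w k)).
  rewrite E diag_mx_sum_delta mulmx_sumr mulmx_suml; apply: eq_bigr => k _.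
  by rewrite -scalemxAr -scalemxAl -mulmxA Ew.
have key : forall k, phi (w k *m mxadj (w k)) *m v = 0.
  move=> k; apply: psd_quad0; first exact: hpos (psd_rank1 _).
  have := bf0 hv; rewrite E1 linear_sum bf_sum => h.
  have hn : forall k0, xpredT k0 -> 0 <= bf v (phi (w k0 *m mxadj (w k0))) v.
    by move=> k0 _; exact: (hpos (psd_rank1 (w k0))).2.
  exact: (@psumr_eq0P _ _ _ _ hn h k isT).
have EP : phi H = \sum_k d 0 k *: phi (w k *m mxadj (w k)).
  by rewrite {1}EH linear_sum; apply: eq_bigr => k _; rewrite linearZ.
split.
  rewrite EP mulmx_suml big1 // => k _.
  by rewrite -scalemxAl key scaler0.
rewrite EP hadj_sum; apply: eq_bigr => k _.
by rewrite hadjZ dr (hpos (psd_rank1 (w k))).1.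
Qed.

Lemma two_neq0 : (2:C) != 0. Proof. by rewrite pnatr_eq0. Qed.

Lemma kerK (v : 'cV[C]_m) A : phi 1%:M *m v = 0 -> phi A *m v = 0.
Proof.
move=> hv; have [h1 h2 e1 _] := herm_split A.
have [k1 _] := kerK_herm hv h1; have [k2 _] := kerK_herm hv h2.
suff : (2:C) *: (phi A *m v) = 0.
  by move/eqP; rewrite scaler_eq0 (negbTE two_neq0) => /eqP.
by rewrite scalemxAl -linearZ e1 linearD [phi ('i *: _)]linearZ mulmxDl -scalemxAl k1 k2 scaler0 addr0.
Qed.

Lemma herm_pres A : mxadj (phi A) = phi (mxadj A).
Proof.
have [h1 h2 e1 e2] := herm_split A.
move: h1 h2 e1 e2; set H1 := A + mxadj A; set H2 := 'i *: (mxadj A - A).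
clearbody H1 H2 => h1 h2 e1 e2.
have [_ k1] := kerK_herm (mulmx0 _ _) h1; have [_ k2] := kerK_herm (mulmx0 _ _) h2.
apply: (scalerI two_neq0).
have -> : (2:C) *: mxadj (phi A) = mxadj (phi ((2:C) *: A)).
  by rewrite linearZ hadjZ rmorph_nat.
have -> : (2:C) *: phi (mxadj A) = phi ((2:C) *: mxadj A) by rewrite linearZ.
rewrite e1 e2 linearD linearB ![phi ('i *: _)]linearZ hadjD hadjZ k1 k2 conjCi.
by rewrite scaleNr.
Qed.
End Gen3.


Section Gen4.
Variable C : numClosedFieldType.

Lemma bfDM k (x y : 'cV[C]_k) (A B : 'M[C]_k) : bf x (A + B) y = bf x A y + bf x B y.
Proof. by rewrite /bf mulmxDr mulmxDl mxE. Qed.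
Lemma bfZM k (x y : 'cV[C]_k) a (A : 'M[C]_k) : bf x (a *: A) y = a * bf x A y.
Proof. by rewrite /bf -scalemxAr -scalemxAl mxE. Qed.
Lemma bf0M k (x y : 'cV[C]_k) : bf x 0 y = 0.
Proof. by rewrite /bf mulmx0 mul0mx mxE. Qed.
Lemma bfDl k (x1 x2 y : 'cV[C]_k) (A : 'M[C]_k) : bf (x1 + x2) A y = bf x1 A y + bf x2 A y.
Proof. by rewrite /bf hadjD !mulmxDl mxE. Qed.
Lemma bfDr k (x y1 y2 : 'cV[C]_k) (A : 'M[C]_k) : bf x A (y1 + y2) = bf x A y1 + bf x A y2.
Proof. by rewrite /bf mulmxDr mxE. Qed.
Lemma bfZl k a (x y : 'cV[C]_k) (A : 'M[C]_k) : bf (a *: x) A y = a^* * bf x A y.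
Proof. by rewrite /bf hadjZ -!scalemxAl mxE. Qed.
Lemma bfZr k a (x y : 'cV[C]_k) (A : 'M[C]_k) : bf x A (a *: y) = a * bf x A y.
Proof. by rewrite /bf -scalemxAr mxE. Qed.

Lemma polar k (M : 'M[C]_k) : (forall x, bf x M x = 0) -> M = 0.
Proof.
move=> h; apply/matrixP => i j; rewrite mxE.
pose ei : 'cV[C]_k := delta_mx i 0; pose ej : 'cV[C]_k := delta_mx j 0.
have hii := h ei; have hjj := h ej.
rewrite /ei /ej !bf_delta in hii hjj.
have h1 := h (ei + ej); have h2 := h (ei + 'i *: ej).
rewrite !bfDl !bfDr !bfZl !bfZr /ei /ej !bf_delta hii hjj conjCi in h1 h2.
have s1 : M i j + M j i = 0 by rewrite -h1; ring.
have s2 : 'i * (M i j - M j i) = 0 by rewrite -h2; ring.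
move/eqP: s2; rewrite mulf_eq0 (negbTE (neq0Ci C)) /= subr_eq0 => /eqP s2.
move: s1; rewrite s2 -mulr2n -mulr_natr => /eqP; rewrite mulf_eq0 pnatr_eq0 orbF.
by move/eqP.
Qed.

Lemma trace_psd0 k (Q X : 'M[C]_k) : psd Q -> psd X -> mxker_sub X Q ->
  \tr (Q *m X) = 0 -> Q = 0.
Proof.
move=> hQ hX hk; have [P [d [PP1 PP2 dge E]]] := psd_decomp hX.
pose p i : 'cV[C]_k := mxadj P *m delta_mx i 0.
have Ep : forall i, (P *m Q *m mxadj P) i i = bf (p i) Q (p i).
  move=> i; rewrite /bf /p hadjM hadjK hadj_delta !mulmxA -rowE.
  by rewrite -colE -!row_mul !mxE.
have -> : \tr (Q *m X) = \sum_i (P *m Q *m mxadj P) i i * d 0 i.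
  rewrite E !mulmxA mxtrace_mulC !mulmxA mul_mx_diag /mxtrace.
  by apply: eq_bigr => i _; rewrite mxE.
move=> hs.
have hn : forall i, xpredT i -> 0 <= (P *m Q *m mxadj P) i i * d 0 i.
  by move=> i _; rewrite Ep; apply: mulr_ge0 => //; exact: hQ.2.
have Qp : forall i, Q *m p i = 0.
  move=> i; have := @psumr_eq0P _ _ _ _ hn hs i isT.
  move/eqP; rewrite mulf_eq0 => /orP [/eqP h|/eqP h].
    by apply: psd_quad0 => //; rewrite -Ep.
  have Dd : diag_mx d *m (delta_mx i 0 : 'cV_k) = 0.
    apply/matrixP => a b; rewrite mul_diag_mx !mxE.
    by case: eqP => [->|_] /=; rewrite ?h ?mul0r ?mulr0.
  apply: hk; rewrite E /p !mulmxA -[_ *m P *m mxadj P]mulmxA PP2 mulmx1.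
  by rewrite -mulmxA Dd mulmx0.
have QP : Q *m mxadj P = 0.
  apply/matrixP => a i; have := congr1 (fun M : 'cV[C]_k => M a 0) (Qp i).
  by rewrite /p mulmxA -colE !mxE.
by rewrite -[Q]mulmx1 -PP1 mulmxA QP mul0mx.
Qed.

End Gen4.


Lemma S0 (R : rcfType) (s g : R[i]) :
  (forall r : R, 0 <= r%:C%C * s + (r ^+ 2)%:C%C * g) -> s = 0.
Proof.
case: s => a b; case: g => c d h.
have H r : (r * b + r ^+ 2 * d = 0) /\ (0 <= r * a + r ^+ 2 * c).
  have := h r; rewrite lecE /= !mul0r !addr0 !subr0 => /andP [/eqP -> ->].
  by [].
have [b1 a1] := H 1; have [b2 a2] := H (-1).
have b0 : b = 0 by move: b1 b2; rewrite !expr2; lra.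
have c0 : 0 <= c by move: a1 a2; rewrite !expr2; lra.
have c1 : 0 < c + 1 by lra.
pose r := - a / (c + 1).
have hr : r * (c + 1) = - a by rewrite /r mulfVK // gt_eqF.
have [_ a3] := H r.
have a0 : a = 0.
  have : 0 <= - r ^+ 2.
    have -> : - r ^+ 2 = r * a + r ^+ 2 * c.
      have -> : a = - (r * (c + 1)) by rewrite hr opprK.
      by ring.
    exact: a3.
  rewrite oppr_ge0 => hr2.
  have : r = 0 by apply/eqP; rewrite -sqrf_eq0 eq_le hr2 sqr_ge0.
  by move=> r0; move: hr; rewrite r0 mul0r => /eqP; rewrite eq_sym oppr_eq0 => /eqP.
by rewrite a0 b0.
Qed.

Lemma realC (R : rcfType) (r : R) : (r%:C%C : R[i]) \is Num.real.
Proof.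
case: (lerP 0 r) => h; first by rewrite realE ler0c h.
by rewrite -[r]opprK rmorphN realN realE ler0c oppr_ge0 ltW.
Qed.

Lemma S2 (R : rcfType) (al be ga : R[i]) :
  (forall t : R[i], 0 <= t^* * al + t * be + t * t^* * ga) -> al = 0 /\ be = 0.
Proof.
move=> h.
have s1 : al + be = 0.
  apply: (S0 (g := ga)) => r; have := h r%:C%C; rewrite conj_Creal ?realC //.
  by rewrite rmorphXn; congr (0 <= _); ring.
have e : forall x : R[i], 'i * x * (- 'i * x) = x ^+ 2.
  move=> x; rewrite (_ : 'i * x * (- 'i * x) = - ('i * 'i) * x ^+ 2); last by ring.
  by rewrite mulCii opprK mul1r.
have s2 : 'i * (be - al) = 0.
  apply: (S0 (g := ga)) => r; have := h ('i * r%:C%C).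
  rewrite rmorphM /= (conj_Creal (realC r)) conjCi.
  have -> : r%:C%C * ('i * (be - al)) + (r ^+ 2)%:C%C * ga = - 'i * r%:C%C * al + 'i * r%:C%C * be + 'i * r%:C%C * (- 'i * r%:C%C) * ga.
    by rewrite e rmorphXn; ring.
  by [].
move/eqP: s2; rewrite mulf_eq0 (negbTE (neq0Ci _)) /= subr_eq0 => /eqP s2.
move: s1; rewrite s2 -mulr2n -mulr_natr => /eqP; rewrite mulf_eq0 pnatr_eq0 orbF => /eqP a0.
by rewrite a0.
Qed.


Section Gen5.
Variable C : numClosedFieldType.

Lemma colK k p (M1 M2 : 'M[C]_k) (B : 'M[C]_(k,p)) :
  (forall v : 'cV_k, M1 *m v = 0 -> M2 *m v = 0) -> M1 *m B = 0 -> M2 *m B = 0.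
Proof.
move=> h hB; apply/matrixP => a j.
have := h (col j B); rewrite colE mulmxA hB mul0mx mulmxA -colE.
move=> /(_ erefl) /(congr1 (fun M : 'cV[C]_k => M a 0)); rewrite !mxE.
by [].
Qed.

Lemma psd1 k : psd (1%:M : 'M[C]_k).
Proof.
split; first exact: hadj1.
move=> x; rewrite mulmx1 mxE; apply: sumr_ge0 => j _; rewrite hadjE mulrC.
exact: mul_conjC_ge0.
Qed.

Lemma tr1 (A : 'M[C]_1) : \tr A = A 0 0.
Proof. by rewrite /mxtrace big_ord1. Qed.

End Gen5.

Lemma faceK (R : rcfType) n m (phi : {linear 'M[R[i]]_n -> 'M[R[i]]_m}) :
  positive_map phi -> forall w u : 'cV[R[i]]_n, phi (w *m mxadj w) = 0 ->
  phi (u *m mxadj w) = 0 /\ phi (w *m mxadj u) = 0.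
Proof.
move=> hpos w u h0.
have Ex : forall t : R[i], (w + t *: u) *m mxadj (w + t *: u) = w *m mxadj w
    + t^* *: (w *m mxadj u) + t *: (u *m mxadj w) + (t * t^*) *: (u *m mxadj u).
  move=> t; rewrite hadjD hadjZ mulmxDl !mulmxDr -!scalemxAl -!scalemxAr scalerA.
  by rewrite !addrA.
have key : forall x, bf x (phi (w *m mxadj u)) x = 0 /\ bf x (phi (u *m mxadj w)) x = 0.
  move=> x; apply: (S2 (ga := bf x (phi (u *m mxadj u)) x)) => t.
  have hq : 0 <= bf x (phi ((w + t *: u) *m mxadj (w + t *: u))) x.
    exact: (hpos _ (psd_rank1 (w + t *: u))).2 x.
  move: hq; rewrite Ex !linearD ![phi (_ *: _)]linearZ h0 !bfDM !bfZM bf0M add0r.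
  exact.
by split; apply: polar => x; case: (key x).
Qed.

Unset Implicit Arguments.
Set Strict Implicit.

Theorem lemma4p3 (R : rcfType) (n m : nat)
  (phi : {linear 'M[R[i]]_n -> 'M[R[i]]_m})
  (phis : 'M[R[i]]_m -> 'M[R[i]]_n)
  (X : 'M[R[i]]_m) :
  positive_map phi -> is_hs_adjoint phi phis -> psd X ->
  ((ker_sub (R_op X) phis <-> mxker_sub X (phi 1%:M)) /\
   (ker_sub (R_op X) phis -> ker_sub (R_op (phis X)) phi)) /\
  ((ker_sub (L_op X) phis <-> mxker_sub X (phi 1%:M)) /\
   (ker_sub (L_op X) phis -> ker_sub (L_op (phis X)) phi)).
Proof.
move=> hpos hadj hX.
have Xh := hX.1.
have p1h : mxadj (phi 1%:M) = phi 1%:M := (hpos _ (psd1 _ _)).1.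
have hs0 : forall A, phis A = 0 -> hs_inner (phi 1%:M) A = 0.
  by move=> A hA; rewrite hadj hA /hs_inner mulmx0 mxtrace0.
have R1 : ker_sub (R_op X) phis -> mxker_sub X (phi 1%:M).
  move=> h v hv; set y := phi 1%:M *m v.
  have hA : R_op X (y *m mxadj v) = 0.
    by rewrite /R_op -mulmxA -{1}Xh -hadjM hv hadj0 mulmx0.
  have := hs0 _ (h _ hA); rewrite /hs_inner mulmxA mxtrace_mulC.
  by rewrite mulmxA -hadjM => /hadjA0.
have L1 : ker_sub (L_op X) phis -> mxker_sub X (phi 1%:M).
  move=> h v hv; set y := phi 1%:M *m v.
  have hA : L_op X (v *m mxadj y) = 0 by rewrite /L_op mulmxA hv mul0mx.
  have := hs0 _ (h _ hA); rewrite /hs_inner mulmxA mxtrace_mulC p1h => /hadjA0.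
  by [].
have KK : mxker_sub X (phi 1%:M) -> forall (Z : 'M_n) (v : 'cV_m), X *m v = 0 -> phi Z *m v = 0.
  by move=> hk Z v hv; apply: (kerK hpos); apply: hk.
have R2 : mxker_sub X (phi 1%:M) -> ker_sub (R_op X) phis.
  move=> hk A hA; rewrite /R_op in hA; apply: hadjA0.
  rewrite -[LHS]/(hs_inner (phis A) (phis A)) -hadj /hs_inner.
  have h0 : phi (phis A) *m mxadj A = 0.
    apply: (colK (M1 := X)); first by move=> v; exact: KK.
    by rewrite -{1}Xh -hadjM hA hadj0.
  have : \tr (mxadj (mxadj (phi (phis A)) *m A)) = 0.
    by rewrite hadjM hadjK mxtrace_mulC h0 mxtrace0.
  by rewrite htr_adj => /eqP; rewrite conjC_eq0 => /eqP.
have L2 : mxker_sub X (phi 1%:M) -> ker_sub (L_op X) phis.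
  move=> hk A hA; rewrite /L_op in hA; apply: hadjA0.
  rewrite -[LHS]/(hs_inner (phis A) (phis A)) -hadj /hs_inner (herm_pres hpos).
  have -> : phi (mxadj (phis A)) *m A = 0.
    by apply: (colK (M1 := X)) => // v; exact: KK.
  exact: mxtrace0.
have core : mxker_sub X (phi 1%:M) -> forall w, bf w (phis X) w = 0 ->
    phi (w *m mxadj w) = 0.
  move=> hk w hw; have hQ := hpos _ (psd_rank1 w).
  apply: (trace_psd0 hQ hX).
    by move=> v hv; exact: KK.
  rewrite -{1}hQ.1 -[LHS]/(hs_inner _ _) hadj /hs_inner hadjM hadjK.
  by rewrite -mulmxA mxtrace_mulC tr1; exact: hw.
split; split => //.
- move=> /R1 hk B; rewrite /R_op => hB.
  have EB : B = \sum_i (delta_mx i 0 : 'cV_n) *m mxadj (mxadj ((delta_mx 0 i : 'rV_n) *m B)).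
    apply: (etrans (esym (mul1mx B))); rewrite mx1_sum_delta mulmx_suml.
    by apply: eq_bigr => i _; rewrite hadjK mulmxA mul_delta_mx.
  rewrite EB linear_sum big1 // => i _.
  set w := mxadj ((delta_mx 0 i : 'rV_n) *m B).
  have hw : bf w (phis X) w = 0.
    by rewrite /bf /w hadjK -(mulmxA _ B) hB mulmx0 mul0mx mxE.
  by have [h1 _] := faceK hpos (delta_mx i 0) (core hk _ hw).
- move=> /L1 hk B; rewrite /L_op => hB.
  have EB : B = \sum_i (B *m (delta_mx i 0 : 'cV_n)) *m mxadj (delta_mx i 0 : 'cV_n).
    apply: (etrans (esym (mulmx1 B))); rewrite mx1_sum_delta mulmx_sumr.
    by apply: eq_bigr => i _; rewrite hadj_delta -mulmxA mul_delta_mx.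
  rewrite EB linear_sum big1 // => i _.
  set w := B *m (delta_mx i 0 : 'cV_n).
  have hw : bf w (phis X) w = 0.
    by rewrite /bf /w -mulmxA (mulmxA (phis X)) hB mul0mx mulmx0 mxE.
  by have [_ h1] := faceK hpos (delta_mx i 0) (core hk _ hw).
Qed.
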